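(* In the algebra $\mathcal O_q$ defined in the context, for all $n\in\mathbb N$: $$\mathcal W_{n+1}=-(q-q^{-1})^{-1}\sum_{k=0}^n\sum_{\ell=0}^k\binom{k}{\ell}q^{2\ell-k}[2]_q^{-k-2}\mathcal G_{n-k}\tilde B_{(k-2\ell)\delta+\alpha_0},$$ $$\mathcal W_{-n}=-(q-q^{-1})^{-1}\sum_{k=0}^n\sum_{\ell=0}^k\binom{k}{\ell}q^{k-2\ell}[2]_q^{-k-2}\mathcal G_{n-k}\tilde B_{(k-2\ell)\delta+\alpha_1}.$$
   Context: All algebras are associative and unital over a field $\mathbb F$; $q\in\mathbb F$ is nonzero and not a root of unity; $[n]_q=(q^n-q^{-n})/(q-q^{-1})$. For elements $X,Y$ of an algebra, $[X,Y]=XY-YX$ and $[X,Y]_q=qXY-q^{-1}YX$. Let $\rho=-(q^2-q^{-2})^2$. The algebra $\mathcal O_q$ is defined by generators $\mathcal W_{-k},\mathcal W_{k+1},\mathcal G_{k+1},\tilde{\mathcal G}_{k+1}$ ($k\in\mathbb N$) and the following relations for all $k,\ell\in\mathbb N$: $[\mathcal W_0,\mathcal W_{k+1}]=[\mathcal W_{-k},\mathcal W_1]=(\tilde{\mathcal G}_{k+1}-\mathcal G_{k+1})/(q+q^{-1})$; $[\mathcal W_0,\mathcal G_{k+1}]_q=[\tilde{\mathcal G}_{k+1},\mathcal W_0]_q=\rho\mathcal W_{-k-1}-\rho\mathcal W_{k+1}$; $[\mathcal G_{k+1},\mathcal W_1]_q=[\mathcal W_1,\tilde{\mathcal G}_{k+1}]_q=\rho\mathcal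 W_{k+2}-\rho\mathcal W_{-k}$; $[\mathcal W_{-k},\mathcal W_{-\ell}]=0$, $[\mathcal W_{k+1},\mathcal W_{\ell+1}]=0$; $[\mathcal W_{-k},\mathcal W_{\ell+1}]+[\mathcal W_{k+1},\mathcal W_{-\ell}]=0$; $[\mathcal W_{-k},\mathcal G_{\ell+1}]+[\mathcal G_{k+1},\mathcal W_{-\ell}]=0$; $[\mathcal W_{-k},\tilde{\mathcal G}_{\ell+1}]+[\tilde{\mathcal G}_{k+1},\mathcal W_{-\ell}]=0$; $[\mathcal W_{k+1},\mathcal G_{\ell+1}]+[\mathcal G_{k+1},\mathcal W_{\ell+1}]=0$; $[\mathcal W_{k+1},\tilde{\mathcal G}_{\ell+1}]+[\tilde{\mathcal G}_{k+1},\mathcal W_{\ell+1}]=0$; $[\mathcal G_{k+1},\mathcal G_{\ell+1}]=0$, $[\tilde{\mathcal G}_{k+1},\tilde{\mathcal G}_{\ell+1}]=0$; $[\tilde{\mathcal G}_{k+1},\mathcal G_{\ell+1}]+[\mathcal G_{k+1},\tilde{\mathcal G}_{\ell+1}]=0$. Convention: $\mathcal G_0=-(q-q^{-1})[2]_q^2$. Define $\tilde B_\delta=q^{-2}\mathcal W_0\mathcal W_1-\mathcal W_1\mathcal W_0$; $\tilde B_{\alpha_0}=\mathcal W_1$, $\tilde B_{\delta+\alpha_0}=\mathcal W_0+\frac{q[\tilde B_\delta,\mathcal W_1]}{(q-q^{-1})(q^2-q^{-2})}$, $\tilde B_{n\delta+\alpha_0}=\tilde B_{(n-2)\delta+\alpha_0}+\frac{q[\tilde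 B_\delta,\tilde B_{(n-1)\delta+\alpha_0}]}{(q-q^{-1})(q^2-q^{-2})}$ for $n\ge2$; $\tilde B_{\alpha_1}=\mathcal W_0$, $\tilde B_{\delta+\alpha_1}=\mathcal W_1-\frac{q[\tilde B_\delta,\mathcal W_0]}{(q-q^{-1})(q^2-q^{-2})}$, $\tilde B_{n\delta+\alpha_1}=\tilde B_{(n-2)\delta+\alpha_1}-\frac{q[\tilde B_\delta,\tilde B_{(n-1)\delta+\alpha_1}]}{(q-q^{-1})(q^2-q^{-2})}$ for $n\ge2$. For negative integers $k$, set $\tilde B_{k\delta+\alpha_0}=\tilde B_{(-k-1)\delta+\alpha_1}$ and $\tilde B_{k\delta+\alpha_1}=\tilde B_{(-k-1)\delta+\alpha_0}$. *)

(* Defs.v *)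
From mathcomp Require Import all_boot all_order all_algebra.
Set Implicit Arguments. Unset Strict Implicit. Unset Printing Implicit Defensive.
Import Order.TTheory GRing.Theory Num.Theory.
Local Open Scope ring_scope.

(* Conventions: for an F-algebra A, the generators of O_q are given by four
   families indexed by nat:
     Wn k = W_{-k},  Wp k = W_{k+1},  G k = G_{k+1},  Gt k = tilde G_{k+1}. *)

Section Oq.
Variables (F : fieldType) (A : algType F) (q : F).

Definition qint (n : nat) : F := (q ^+ n - q ^- n) / (q - q^-1).
Definition rho : F := - (q ^+ 2 - q ^- 2) ^+ 2.

Definition comm (X Y : A) : A := X * Y - Y * X.
Definition qcomm (X Y : A) : A := q *: (X * Y) - q^-1 *: (Y * X).

Variables (Wn Wp G Gt : nat -> A).

Definition Oq_relations : Prop :=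
  forall k l : nat,
  comm (Wn 0) (Wp k) = (q + q^-1)^-1 *: (Gt k - G k) /\
      comm (Wn k) (Wp 0) = (q + q^-1)^-1 *: (Gt k - G k) /\
      qcomm (Wn 0) (G k) = rho *: Wn k.+1 - rho *: Wp k /\
      qcomm (Gt k) (Wn 0) = rho *: Wn k.+1 - rho *: Wp k /\
      qcomm (G k) (Wp 0) = rho *: Wp k.+1 - rho *: Wn k /\
      qcomm (Wp 0) (Gt k) = rho *: Wp k.+1 - rho *: Wn k /\
      comm (Wn k) (Wn l) = 0 /\
      comm (Wp k) (Wp l) = 0 /\
   comm (Wn k) (Wp l) + comm (Wp k) (Wn l) = 0 /\
       comm (Wn k) (G l) + comm (G k) (Wn l) = 0 /\
       comm (Wn k) (Gt l) + comm (Gt k) (Wn l) = 0 /\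
       comm (Wp k) (G l) + comm (G k) (Wp l) = 0 /\
       comm (Wp k) (Gt l) + comm (Gt k) (Wp l) = 0 /\
       comm (G k) (G l) = 0 /\
       comm (Gt k) (Gt l) = 0 /\
       comm (Gt k) (G l) + comm (G k) (Gt l) = 0.

(* G_n for all n in N, with the convention G_0 = -(q - q^-1) [2]_q^2. *)
Definition Gfull (n : nat) : A :=
  if n is k.+1 then G k else (- (q - q^-1) * qint 2 ^+ 2)%:A.

Definition Bdelta : A := q ^- 2 *: (Wn 0 * Wp 0) - Wp 0 * Wn 0.

Definition Bcoef : F := q / ((q - q^-1) * (q ^+ 2 - q ^- 2)).

(* pairs (B_{n delta + alpha_0}, B_{(n+1) delta + alpha_0}) *)
Fixpoint Ba0pair (n : nat) : A * A :=
  match n with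
  | 0 => (Wp 0, Wn 0 + Bcoef *: comm Bdelta (Wp 0))
  | m.+1 => let p := Ba0pair m in (p.2, p.1 + Bcoef *: comm Bdelta p.2)
  end.

(* pairs (B_{n delta + alpha_1}, B_{(n+1) delta + alpha_1}) *)
Fixpoint Ba1pair (n : nat) : A * A :=
  match n with
  | 0 => (Wn 0, Wp 0 - Bcoef *: comm Bdelta (Wn 0))
  | m.+1 => let p := Ba1pair m in (p.2, p.1 - Bcoef *: comm Bdelta p.2)
  end.

Definition Ba0 (n : nat) : A := (Ba0pair n).1.
Definition Ba1 (n : nat) : A := (Ba1pair n).1.

(* extension to integer k: B_{k delta + alpha_0} = B_{(-k-1) delta + alpha_1}
   for k < 0, and symmetrically. *)
Definition Btil0 (k : int) : A :=
  match k with Posz n => Ba0 n | Negz n => Ba1 n end.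
Definition Btil1 (k : int) : A :=
  match k with Posz n => Ba1 n | Negz n => Ba0 n end.

End Oq.

(* Main.v *)
Require Import Defs.
From mathcomp Require Import all_boot all_order all_algebra.
Import Order.TTheory GRing.Theory Num.Theory.
Local Open Scope ring_scope.
From mathcomp Require Import zify ring.
Set Implicit Arguments. Unset Strict Implicit. Unset Printing Implicit Defensive.

Section NCRing.
Variables (F : fieldType) (A : algType F).

Inductive cterm := CVar of nat | CZero | COne | CAdd of cterm & cterm
  | CMul of cterm & cterm | COpp of cterm.

Inductive nterm := NAtom of nat | NZero | NOne | NAdd of nterm & nterm
  | NOpp of nterm | NMul of nterm & nterm | NScale of nat & nterm.

Variables (senv : seq F) (env : seq A).

Fixpoint ceval (c : cterm) : F :=
  match c with
  | CVar i => nth 0 senv i | CZero => 0 | COne => 1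
  | CAdd a b => ceval a + ceval b | CMul a b => ceval a * ceval b
  | COpp a => - ceval a end.

Fixpoint neval (t : nterm) : A :=
  match t with
  | NAtom i => nth 0 env i | NZero => 0 | NOne => 1
  | NAdd a b => neval a + neval b | NOpp a => - neval a
  | NMul a b => neval a * neval b | NScale i a => nth 0 senv i *: neval a end.

Fixpoint meval (w : seq nat) : A :=
  match w with [::] => 1 | i :: w' => nth 0 env i * meval w' end.

Definition peval (p : seq (cterm * seq nat)) : A :=
  \sum_(m <- p) ceval m.1 *: meval m.2.

Definition pmul (p1 p2 : seq (cterm * seq nat)) :=
  flatten (map (fun m1 => map (fun m2 => (CMul m1.1 m2.1, m1.2 ++ m2.2)) p2) p1).

Fixpoint norm (t : nterm) : seq (cterm * seq nat) :=
  match t with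
  | NAtom i => [:: (COne, [:: i])] | NZero => [::] | NOne => [:: (COne, [::])]
  | NAdd a b => norm a ++ norm b
  | NOpp a => map (fun m => (COpp m.1, m.2)) (norm a)
  | NMul a b => pmul (norm a) (norm b)
  | NScale i a => map (fun m => (CMul (CVar i) m.1, m.2)) (norm a) end.

Lemma meval_cat w1 w2 : meval (w1 ++ w2) = meval w1 * meval w2.
Proof. by elim: w1 => [|i w IH] /=; rewrite ?mul1r // IH mulrA. Qed.

Lemma peval_cat p1 p2 : peval (p1 ++ p2) = peval p1 + peval p2.
Proof. by rewrite /peval big_cat. Qed.

Lemma peval_pmul p1 p2 : peval (pmul p1 p2) = peval p1 * peval p2.
Proof.
elim: p1 => [|m p IH]; first by rewrite /peval /pmul /= !big_nil mul0r.
rewrite /pmul /= -/(pmul p p2) peval_cat IH /peval big_cons mulrDl; congr (_ + _).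
rewrite big_map mulr_sumr; apply: eq_bigr => m2 _ /=.
by rewrite meval_cat -scalerAl -scalerAr scalerA.
Qed.

Lemma norm_ok t : neval t = peval (norm t).
Proof.
elim: t => [i||| a IHa b IHb | a IHa | a IHa b IHb | i a IHa] /=.
- by rewrite /peval big_seq1 /= mulr1 scale1r.
- by rewrite /peval big_nil.
- by rewrite /peval big_seq1 /= scale1r.
- by rewrite peval_cat IHa IHb.
- by rewrite IHa /peval big_map -sumrN; apply: eq_bigr => m _ /=; rewrite scaleNr.
- by rewrite peval_pmul IHa IHb.
- by rewrite IHa /peval big_map scaler_sumr; apply: eq_bigr => m _ /=; rewrite scalerA.
Qed.

Definition coef (p : seq (cterm * seq nat)) (w : seq nat) : cterm :=
  foldr (fun m acc => if m.2 == w then CAdd m.1 acc else acc) CZero p.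

Lemma coefE p w : ceval (coef p w) = \sum_(m <- p | m.2 == w) ceval m.1.
Proof.
elim: p => [|m p IH] /=; first by rewrite big_nil.
by rewrite big_cons; case: ifP => _ //=; rewrite IH.
Qed.

Lemma peval_ws p ws : uniq ws -> {subset map snd p <= ws} ->
  peval p = \sum_(w <- ws) ceval (coef p w) *: meval w.
Proof.
move=> uws; elim: p => [|m p IH] sub.
  by rewrite /peval big_nil big1 // => w _; rewrite /= scale0r.
have mw : m.2 \in ws by apply: sub; rewrite inE eqxx.
rewrite /peval big_cons -/(peval p) IH; last by move=> w wp; apply: sub; rewrite inE wp orbT.
rewrite (bigD1_seq m.2) //= [in RHS](bigD1_seq m.2) //= eqxx /= scalerDl addrA.
congr (_ + _); apply: eq_bigr => w; rewrite eq_sym => /negbTE ->; done.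
Qed.

Definition condlist (p1 p2 : seq (cterm * seq nat)) :=
  map (fun w => (coef p1 w, coef p2 w)) (undup (map snd (p1 ++ p2))).

Fixpoint all_eq (l : seq (cterm * cterm)) : Prop :=
  match l with [::] => True | pr :: l' => ceval pr.1 = ceval pr.2 /\ all_eq l' end.

Lemma all_eqP (f g : seq nat -> cterm) ws :
  all_eq (map (fun w => (f w, g w)) ws) -> forall w, w \in ws -> ceval (f w) = ceval (g w).
Proof.
elim: ws => [|a l IH] //= [ha hl] w; rewrite inE => /orP[/eqP -> //|]; exact: IH.
Qed.

Lemma nc_correct t1 t2 : all_eq (condlist (norm t1) (norm t2)) -> neval t1 = neval t2.
Proof.
move=> H; rewrite !norm_ok.
set ws := undup (map snd (norm t1 ++ norm t2)).
have uws : uniq ws by apply: undup_uniq.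
rewrite (@peval_ws _ ws) ?(@peval_ws (norm t2) ws) //.
- apply: eq_big_seq => w wws; congr (_ *: _).
  exact: (all_eqP H).
- by move=> w wi; rewrite mem_undup map_cat mem_cat wi orbT.
- by move=> w wi; rewrite mem_undup map_cat mem_cat wi.
Qed.

End NCRing.

Ltac nc_lookup x l :=
  match l with
  | x :: _ => constr:(0%N)
  | _ :: ?l' => let n := nc_lookup x l' in constr:(S n)
  end.

Ltac nc_add x l :=
  match constr:(tt) with
  | _ => let _ := nc_lookup x l in constr:(l)
  | _ => constr:(x :: l)
  end.

Ltac nc_collect t al sl :=
  match t with
  | (?a + ?b)%R => let r := nc_collect a al sl in
                   match r with (?al', ?sl') => nc_collect b al' sl' end
  | (- ?a)%R => nc_collect a al sl
  | (?a * ?b)%R => let r := nc_collect a al sl in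
                   match r with (?al', ?sl') => nc_collect b al' sl' end
  | (?c *: ?a)%R => let sl' := nc_add c sl in nc_collect a al sl'
  | 0%R => constr:((al, sl))
  | 1%R => constr:((al, sl))
  | _ => let al' := nc_add t al in constr:((al', sl))
  end.

Ltac nc_reify t al sl :=
  match t with
  | (?a + ?b)%R => let x := nc_reify a al sl in let y := nc_reify b al sl in constr:(NAdd x y)
  | (- ?a)%R => let x := nc_reify a al sl in constr:(NOpp x)
  | (?a * ?b)%R => let x := nc_reify a al sl in let y := nc_reify b al sl in constr:(NMul x y)
  | (?c *: ?a)%R => let i := nc_lookup c sl in let x := nc_reify a al sl in constr:(NScale i x)
  | 0%R => constr:(NZero)
  | 1%R => constr:(NOne)
  | _ => let i := nc_lookup t al in constr:(NAtom i)
  end.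

Ltac nc_ring_core F :=
  match goal with
  | |- ?L = ?R =>
    let TA := type of L in
    let r0 := nc_collect L (@nil TA) (@nil (GRing.Field.sort F)) in
    match r0 with (?al0, ?sl0) =>
    let r := nc_collect R al0 sl0 in
    match r with (?al, ?sl) =>
    let tl := nc_reify L al sl in
    let tr := nc_reify R al sl in
    change (neval sl al tl = neval sl al tr);
    apply: nc_correct;
    let c := eval vm_compute in (condlist (norm tl) (norm tr)) in
    change (all_eq sl c);
    cbv beta iota delta [all_eq ceval nth fst snd]
    end end
  end.

Ltac nc_side := repeat (apply/andP; split); try assumption.
Ltac nc_ring F := nc_ring_core F; repeat split; first [ring | (field; nc_side)].


Section Sums.
Variables (F : fieldType) (A : algType F).

Definition Isum (r : F) (k : nat) (Z : int -> A) : A :=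
  \sum_(l < k.+1) ('C(k, l)%:R * r ^ (2 * l%:Z - k%:Z)) *: Z (k%:Z - 2 * l%:Z).

Definition Ssum (r h : F) (g : nat -> A) (Z : int -> A) (n : nat) : A :=
  \sum_(k < n.+1) h ^+ (k + 2) *: (g (n - k)%N * Isum r k Z).

Lemma Isum_ext r k (Z1 Z2 : int -> A) : (forall j, Z1 j = Z2 j) -> Isum r k Z1 = Isum r k Z2.
Proof. by move=> e; apply: eq_bigr => l _; rewrite e. Qed.

Lemma Isum_add r k (Z1 Z2 : int -> A) : Isum r k (fun j : int => Z1 j + Z2 j) = Isum r k Z1 + Isum r k Z2.
Proof. by rewrite /Isum -big_split; apply: eq_bigr => l _; rewrite scalerDr. Qed.

Definition commA (X Y : A) := X * Y - Y * X.

Lemma commA_sumr X I (r : seq I) (P : pred I) (f : I -> A) :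
  commA X (\sum_(i <- r | P i) f i) = \sum_(i <- r | P i) commA X (f i).
Proof. by rewrite /commA mulr_sumr mulr_suml -sumrB. Qed.

Lemma commA_scaler X c Y : commA X (c *: Y) = c *: commA X Y.
Proof. by rewrite /commA scalerBr -scalerAr -scalerAl. Qed.

Lemma Isum_comm r k d X (Z : int -> A) :
  Isum r k (fun j : int => d *: commA X (Z j)) = d *: commA X (Isum r k Z).
Proof.
rewrite /Isum commA_sumr scaler_sumr; apply: eq_bigr => l _.
by rewrite commA_scaler !scalerA mulrC.
Qed.

Lemma Isum0 r (Z : int -> A) : Isum r 0 Z = Z 0.
Proof. by rewrite /Isum big_ord1 /= bin0 mul1r expr0z scale1r. Qed.

Lemma bump0' i : bump 0 i = i.+1.
Proof. by rewrite /bump leq0n add1n. Qed.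

Lemma Isum_pascal r k (Z : int -> A) : r != 0 ->
  Isum r k.+1 Z = r^-1 *: Isum r k (fun j : int => Z (j + 1)) + r *: Isum r k (fun j : int => Z (j - 1)).
Proof.
move=> r0.
rewrite {1}/Isum big_ord_recl /=.
under eq_bigr => i _ do rewrite bump0' binS natrD mulrDl scalerDl.
rewrite big_split /= addrA; congr (_ + _).
- rewrite [in RHS]/Isum [in RHS]big_ord_recl [in LHS]big_ord_recr /= (bin_small (ltnSn k)) mul0r scale0r.
  rewrite addr0 scalerDr scaler_sumr; congr (_ + _).
  + rewrite !bin0 !mul1r scalerA; congr (_ *: _); last by congr (Z _); lia.
    have -> : (2 * (0%N)%:Z - (k.+1)%:Z) = (2 * (0%N)%:Z - k%:Z) + (-1) by lia.
    by rewrite expfzDr // mulrC -invr_expz expr1z.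
  + rewrite addr0; apply: eq_bigr => i _; rewrite bump0' scalerA mulrA [r^-1 * _]mulrC -mulrA.
    congr (_ *: _); last by congr (Z _); lia.
    congr (_ * _).
    have -> : (2 * (i.+1)%:Z - (k.+1)%:Z) = (2 * (i.+1)%:Z - k%:Z) + (-1) by lia.
    by rewrite expfzDr // mulrC -invr_expz expr1z.
- rewrite /Isum scaler_sumr; apply: eq_bigr => i _; rewrite scalerA mulrCA.
  congr (_ *: _); last by congr (Z _); lia.
  congr (_ * _).
  have -> : (2 * (i.+1)%:Z - (k.+1)%:Z) = (2 * i%:Z - k%:Z) + 1 by lia.
  by rewrite expfzDr // expr1z mulrC.
Qed.

Lemma Isum_rev r k (Z : int -> A) : r != 0 -> Isum r k Z = Isum r^-1 k (fun j : int => Z (- j)).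
Proof.
move=> r0; rewrite /Isum (reindex_inj rev_ord_inj) /=; apply: eq_bigr => l _.
have lk : (l <= k)%N by rewrite -ltnS ltn_ord.
rewrite subSS bin_sub // exprz_inv; congr (_ *: _); last by congr (Z _); lia.
by congr (_ * _); congr (r ^ _); lia.
Qed.

Lemma step_term (P h r d : F) (g X IZ IZm : A) : h * (r + r^-1) = 1 -> g * X = X * g -> r != 0 ->
  (P * h) *: (g * (r^-1 *: (IZm + d *: commA X IZ) + r *: IZm)) =
  P *: (g * IZm) + (r^-1 * d * h) *: commA X (P *: (g * IZ)).
Proof.
move=> hh gX r0; apply/eqP; rewrite -subr_eq0; apply/eqP.
have -> : (P * h) *: (g * (r^-1 *: (IZm + d *: commA X IZ) + r *: IZm)) -
  (P *: (g * IZm) + (r^-1 * d * h) *: commA X (P *: (g * IZ))) =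
  (P * h * r^-1 * d) *: ((g * X - X * g) * IZ) + (P * (h * (r + r^-1)) - P) *: (g * IZm).
  by rewrite /commA; nc_ring F.
by rewrite gX subrr mul0r scaler0 add0r hh mulr1 subrr scale0r.
Qed.

Lemma Ssum_step r h d g X (Z : int -> A) n : r != 0 -> h * (r + r^-1) = 1 ->
  (forall i, g i * X = X * g i) ->
  (forall j : int, Z (j + 1) = Z (j - 1) + d *: commA X (Z j)) ->
  Ssum r h g Z n.+1 = Ssum r h g (fun j : int => Z (j - 1)) n + h ^+ 2 *: (g n.+1 * Z 0)
    + (r^-1 * d * h) *: commA X (Ssum r h g Z n).
Proof.
move=> r0 hh gX hZ.
rewrite {1}/Ssum big_ord_recl /= subn0 Isum0 add0n addrC -addrA [h^+2 *: _ + _]addrC addrA.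
congr (_ + _).
rewrite /Ssum commA_sumr scaler_sumr -big_split /=; apply: eq_bigr => k _.
rewrite bump0' subSS Isum_pascal // (@Isum_ext _ _ (fun j : int => Z (j + 1))
   (fun j : int => Z (j - 1) + d *: commA X (Z j))) // Isum_add Isum_comm.
rewrite (_ : (k.+1 + 2)%N = (k + 2).+1) // exprSr -step_term //.
Qed.
End Sums.

Section Main.
Variables (F : fieldType) (A : algType F) (q : F).
Hypothesis hq0 : q != 0.
Hypothesis hqroot : forall m : nat, (0 < m)%N -> q ^+ m != 1.
Variables (Wn Wp G Gt : nat -> A).
Hypothesis hrel : Oq_relations q Wn Wp G Gt.

Local Notation a := (Wn 0).
Local Notation b := (Wp 0).
Local Notation Bd := (Bdelta q Wn Wp).
Local Notation t := (q + q^-1).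

Lemma t_neq0 : t != 0.
Proof.
apply/negP => /eqP h.
have : q ^+ 4 == 1.
  have h2 : q ^+ 2 = -1.
    have : q * (q + q^-1) == 0 by rewrite h mulr0.
    by rewrite mulrDr mulfV // -expr2 addr_eq0 => /eqP.
  by rewrite (_ : 4 = 2 * 2)%N // exprM h2 expr2 mulrNN mulr1.
by rewrite (negbTE (hqroot (isT : (0 < 4)%N))).
Qed.

Lemma qmqi_neq0 : q - q^-1 != 0.
Proof.
apply/negP => /eqP h.
have : q ^+ 2 == 1.
  have : q * (q - q^-1) = 0 by rewrite h mulr0.
  by rewrite mulrBr mulfV // expr2 => /eqP; rewrite subr_eq0.
by rewrite (negbTE (hqroot (isT : (0 < 2)%N))).
Qed.

Lemma q2m1 : q * q - 1 != 0.
Proof. by rewrite subr_eq0 -expr2 hqroot. Qed.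

Lemma q2p1 : q * q + 1 != 0.
Proof.
apply/negP => /eqP h.
have h2 : q ^+ 2 = -1 by rewrite expr2; apply/eqP; rewrite -subr_eq0 opprK h.
have : q ^+ 4 == 1 by rewrite (_ : 4 = 2 * 2)%N // exprM h2 expr2 mulrNN mulr1.
by rewrite (negbTE (hqroot (isT : (0 < 4)%N))).
Qed.

Lemma q4m1 : (q * q) ^+ 2 - 1 != 0.
Proof. by rewrite subr_eq0 -expr2 -exprM hqroot. Qed.

Lemma R1 k : comm a (Wp k) = t^-1 *: (Gt k - G k). Proof. by case: (hrel k 0). Qed.
Lemma R2 k : comm (Wn k) b = t^-1 *: (Gt k - G k). Proof. by case: (hrel k 0) => _ []. Qed.
Lemma R3 k : qcomm q a (G k) = rho q *: Wn k.+1 - rho q *: Wp k.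
Proof. by case: (hrel k 0) => _ [] _ []. Qed.
Lemma R4 k : qcomm q (Gt k) a = rho q *: Wn k.+1 - rho q *: Wp k.
Proof. by case: (hrel k 0) => _ [] _ [] _ []. Qed.
Lemma R5 k : qcomm q (G k) b = rho q *: Wp k.+1 - rho q *: Wn k.
Proof. by case: (hrel k 0) => _ [] _ [] _ [] _ []. Qed.
Lemma R6 k : qcomm q b (Gt k) = rho q *: Wp k.+1 - rho q *: Wn k.
Proof. by case: (hrel k 0) => _ [] _ [] _ [] _ [] _ []. Qed.
Lemma R7 k l : comm (Wn k) (Wn l) = 0.
Proof. by case: (hrel k l) => _ [] _ [] _ [] _ [] _ [] _ []. Qed.
Lemma R8 k l : comm (Wp k) (Wp l) = 0.
Proof. by case: (hrel k l) => _ [] _ [] _ [] _ [] _ [] _ [] _ []. Qed.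
Lemma R14 k l : comm (G k) (G l) = 0.
Proof. by case: (hrel k l) => _ [] _ [] _ [] _ [] _ [] _ [] _ [] _ [] _ [] _ [] _ [] _ [] _ [] []. Qed.
Lemma R15 k l : comm (Gt k) (Gt l) = 0.
Proof. by case: (hrel k l) => _ [] _ [] _ [] _ [] _ [] _ [] _ [] _ [] _ [] _ [] _ [] _ [] _ [] _ []. Qed.
Lemma R16 k l : comm (Gt k) (G l) + comm (G k) (Gt l) = 0.
Proof. by case: (hrel k l) => _ [] _ [] _ [] _ [] _ [] _ [] _ [] _ [] _ [] _ [] _ [] _ [] _ [] _ [] _. Qed.

Lemma eq_of_scale (c : F) (x y : A) : c != 0 -> c *: (x - y) = 0 -> x = y.
Proof. by move=> c0 /eqP; rewrite scaler_eq0 (negbTE c0) subr_eq0 => /eqP. Qed.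

Lemma L1a k : comm (G k) b = - q *: comm Bd (Wp k).
Proof.
have hY : Gt k = G k + t *: comm a (Wp k).
  by rewrite R1 scalerA mulfV ?t_neq0 // scale1r addrC subrK.
have h56 : qcomm q (G k) b - qcomm q b (Gt k) = 0 by rewrite R5 R6 subrr.
have h8 := R8 k 0.
rewrite hY in h56.
apply: (@eq_of_scale t); first exact: t_neq0.
match type of h56 with ?D = 0 =>
  have -> : t *: (comm (G k) b - (- q *: comm Bd (Wp k))) =
     D + (q * t) *: (comm (Wp k) b * a) - (q^-1 * t) *: (a * comm (Wp k) b)
end.
  by rewrite /comm /qcomm /Bdelta; nc_ring F.
by rewrite h56 h8 mul0r mulr0 !scaler0 addr0 subr0.
Qed.

Lemma L1b k : comm (G k) a = - q *: comm Bd (Wn k).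
Proof.
have hY : Gt k = G k + t *: comm (Wn k) b.
  by rewrite R2 scalerA mulfV ?t_neq0 // scale1r addrC subrK.
have h34 : qcomm q a (G k) - qcomm q (Gt k) a = 0 by rewrite R3 R4 subrr.
have h7 := R7 k 0.
rewrite hY in h34.
apply: (@eq_of_scale t); first exact: t_neq0.
match type of h34 with ?D = 0 =>
  have -> : t *: (comm (G k) a - (- q *: comm Bd (Wn k))) =
     - D + (q * t) *: (b * comm (Wn k) a) - (q^-1 * t) *: (comm (Wn k) a * b)
end.
  by rewrite /comm /qcomm /Bdelta; nc_ring F.
by rewrite h34 h7 mul0r mulr0 !scaler0 !(oppr0, addr0, subr0).
Qed.

Lemma Kcomm k : comm (comm a b) (comm a (Wp k)) = 0.
Proof.
rewrite R1 R1.
have -> : comm (t^-1 *: (Gt 0 - G 0)) (t^-1 *: (Gt k - G k)) =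
  (t^-1 * t^-1) *: (comm (Gt 0) (Gt k) + comm (G 0) (G k) - (comm (Gt 0) (G k) + comm (G 0) (Gt k))).
  by rewrite /comm; nc_ring F.
by rewrite R14 R15 R16 addr0 subr0 scaler0.
Qed.

Lemma L2 k : comm (G k) Bd = 0.
Proof.
have D : comm (G k) Bd = q^-2 *: (comm (G k) a * b + a * comm (G k) b) - (comm (G k) b * a + b * comm (G k) a).
  by rewrite /comm /Bdelta; nc_ring F.
rewrite D L1a L1b.
set U := Wp k. set V := Wn k.
have r1 : comm V a = 0 by apply: R7.
have r2 : comm U b = 0 by apply: R8.
have r3 : comm V b - comm a U = 0 by rewrite R1 R2 subrr.
have K := Kcomm k.
have -> : q^-2 *: ((- q *: comm Bd V) * b + a * (- q *: comm Bd U)) - ((- q *: comm Bd U) * a + b * (- q *: comm Bd V))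
  = q^-1 *: comm (comm a b) (comm a U) +
  ((-(1%:R) * q^-1)) *: (b * a * (comm V b - comm a U)) + ((1%:R * q^-3)) *: (comm V a * b * b) + ((-(1%:R) * q^-1)) *: ((comm V b - comm a U) * a * b) + ((-(2%:R) * q^-1)) *: (a * comm U b * a) + ((1%:R * q^+1)) *: (comm U b * a * a) + ((-(2%:R) * q^-1)) *: (b * comm V a * b) + ((1%:R * q^+1)) *: (b * (comm V b - comm a U) * a) + ((1%:R * q^-3)) *: (a * (comm V b - comm a U) * b) + ((1%:R * q^+1)) *: (b * b * comm V a) + ((1%:R * q^-3)) *: (a * a * comm U b).
  by rewrite /comm /Bdelta; nc_ring F.
by rewrite K r1 r2 r3 !(mulr0, mul0r, scaler0, addr0).
Qed.

Local Notation X := (Btil0 q Wn Wp).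
Local Notation Y := (Btil1 q Wn Wp).
Local Notation c := (Bcoef q).

Lemma X_rec j : X (j + 1) = X (j - 1) + c *: comm Bd (X j).
Proof.
case: j => [[|m]|[|m]].
- rewrite (_ : Posz 0 + 1 = Posz 1); last by lia.
  rewrite (_ : Posz 0 - 1 = Negz 0); last by lia.
  by rewrite /Btil0 /Ba0 /Ba1 /=.
- rewrite (_ : Posz m.+1 + 1 = Posz m.+2); last by lia.
  rewrite (_ : Posz m.+1 - 1 = Posz m); last by lia.
  by rewrite /Btil0 /Ba0 /=.
- rewrite (_ : Negz 0 + 1 = Posz 0); last by lia.
  rewrite (_ : Negz 0 - 1 = Negz 1); last by lia.
  by rewrite /Btil0 /Ba0 /Ba1 /= subrK.
- rewrite (_ : Negz m.+1 + 1 = Negz m); last by lia.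
  rewrite (_ : Negz m.+1 - 1 = Negz m.+2); last by lia.
  by rewrite /Btil0 /Ba1 /= subrK.
Qed.

Lemma Y_rec j : Y (j + 1) = Y (j - 1) + (- c) *: comm Bd (Y j).
Proof.
rewrite scaleNr.
case: j => [[|m]|[|m]].
- rewrite (_ : Posz 0 + 1 = Posz 1); last by lia.
  rewrite (_ : Posz 0 - 1 = Negz 0); last by lia.
  by rewrite /Btil1 /Ba0 /Ba1 /=.
- rewrite (_ : Posz m.+1 + 1 = Posz m.+2); last by lia.
  rewrite (_ : Posz m.+1 - 1 = Posz m); last by lia.
  by rewrite /Btil1 /Ba1 /=.
- rewrite (_ : Negz 0 + 1 = Posz 0); last by lia.
  rewrite (_ : Negz 0 - 1 = Negz 1); last by lia.
  by rewrite /Btil1 /Ba0 /Ba1 /= addrK.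
- rewrite (_ : Negz m.+1 + 1 = Negz m); last by lia.
  rewrite (_ : Negz m.+1 - 1 = Negz m.+2); last by lia.
  by rewrite /Btil1 /Ba0 /= addrK.
Qed.

Lemma YX j : Y (- j) = X (j - 1).
Proof.
case: j => [[|m]|m].
- rewrite (_ : - Posz 0 = Posz 0); last by lia.
  rewrite (_ : Posz 0 - 1 = Negz 0); last by lia.
  by rewrite /Btil1 /Btil0.
- rewrite (_ : - Posz m.+1 = Negz m); last by lia.
  rewrite (_ : Posz m.+1 - 1 = Posz m); last by lia.
  by rewrite /Btil1 /Btil0.
- rewrite (_ : - Negz m = Posz m.+1); last by lia.
  rewrite (_ : Negz m - 1 = Negz m.+1); last by lia.
  by rewrite /Btil1 /Btil0.
Qed.

Local Notation g := (Gfull q G).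

Lemma gcomm i : g i * Bd = Bd * g i.
Proof.
case: i => [|i] /=; first by rewrite mulr_algl mulr_algr.
by apply/eqP; rewrite -subr_eq0; apply/eqP; apply: L2.
Qed.

Local Notation h := ((qint q 2)^-1).
Local Notation k0 := (- (q - q^-1)^-1).

Lemma qint2 : qint q 2 = t.
Proof.
have := q2m1; rewrite /qint => hm.
by field; nc_side.
Qed.

Lemma rho_neq0 : rho q != 0.
Proof.
rewrite /rho oppr_eq0 expf_neq0 //.
have -> : q ^+ 2 - q ^- 2 = (q - q^-1) * t.
  have := q2m1; have := q2p1 => ? ?.
  by field; nc_side.
by rewrite mulf_neq0 ?qmqi_neq0 ?t_neq0.
Qed.

Lemma comm_commA (U V : A) : comm U V = commA U V.
Proof. by []. Qed.

Lemma SX n : Ssum q^-1 h g Y n = Ssum q h g (fun j => X (j - 1)) n.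
Proof.
apply: eq_bigr => k _; congr (_ *: (_ * _)).
rewrite Isum_rev ?invr_eq0 // invrK; apply: Isum_ext => j; exact: YX.
Qed.

Lemma SY n : Ssum q^-1 h g (fun j => Y (j - 1)) n = Ssum q h g X n.
Proof.
apply: eq_bigr => k _; congr (_ *: (_ * _)).
rewrite Isum_rev ?invr_eq0 // invrK; apply: Isum_ext => j.
rewrite (_ : - j - 1 = - (j + 1)); last by lia.
by rewrite YX addrK.
Qed.

Lemma main_ind n : Wp n = k0 *: Ssum q h g X n /\ Wn n = k0 *: Ssum q^-1 h g Y n.
Proof.
have tn := t_neq0. have mn := qmqi_neq0. have rn := rho_neq0.
have s1 := q2m1. have s2 := q2p1. have s3 := q4m1.
have s4 : - ((q * q) ^+ 2 - 1) ^+ 2 != 0 by rewrite oppr_eq0 expf_neq0.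
have qin : q^-1 != 0 by rewrite invr_eq0.
have hh1 : h * (q + q^-1) = 1 by rewrite qint2 mulVf.
have hh2 : h * (q^-1 + q^-1^-1) = 1 by rewrite invrK addrC qint2 mulVf.
elim: n => [|n [IHp IHn]].
  rewrite /Ssum !big_ord1 /= !Isum0 /= !mulr_algl !scalerA qint2.
  by split; rewrite -[LHS]scale1r; congr (_ *: _); field; nc_side.
split.
- have E : Wp n.+1 = Wn n + (rho q)^-1 *: qcomm q (G n) b.
    by rewrite R5 scalerBr !scalerA mulVf // !scale1r addrC subrK.
  have E2 : qcomm q (G n) b = (q - q^-1) *: (G n * b) + q^-1 *: comm (G n) b.
    by rewrite /qcomm /comm; nc_ring F.
  rewrite E E2 L1a IHp IHn comm_commA commA_scaler.
  rewrite (@Ssum_step _ _ q h c g Bd X n hq0 hh1 gcomm); last by move=> j; rewrite X_rec.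
  rewrite (_ : Ssum q h g (fun j => X (j - 1)) n = Ssum q^-1 h g Y n); last by rewrite SX.
  rewrite (_ : g n.+1 = G n) // (_ : X 0 = b) // qint2 /Bcoef /rho.
  by nc_ring F.
- have E : Wn n.+1 = Wp n + (rho q)^-1 *: qcomm q a (G n).
    by rewrite R3 scalerBr !scalerA mulVf // !scale1r addrC subrK.
  have E2 : qcomm q a (G n) = (q - q^-1) *: (G n * a) - q *: comm (G n) a.
    by rewrite /qcomm /comm; nc_ring F.
  rewrite E E2 L1b IHp IHn comm_commA commA_scaler.
  rewrite (@Ssum_step _ _ q^-1 h (- c) g Bd Y n qin hh2 gcomm); last by move=> j; rewrite Y_rec.
  rewrite (_ : Ssum q^-1 h g (fun j => Y (j - 1)) n = Ssum q h g X n); last by rewrite SY.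
  rewrite (_ : g n.+1 = G n) // (_ : Y 0 = a) // qint2 /Bcoef /rho invrK.
  by nc_ring F.
Qed.

End Main.

Theorem proposition12p4 (F : fieldType) (A : algType F) (q : F)
  (hq0 : q != 0) (hqroot : forall m : nat, (0 < m)%N -> q ^+ m != 1)
  (Wn Wp G Gt : nat -> A)
  (hrel : Oq_relations q Wn Wp G Gt) (n : nat) :
  Wp n = - (q - q^-1)^-1 *:
    \sum_(k < n.+1) \sum_(l < k.+1)
      (('C(k, l))%:R * q ^ (2 * l%:Z - k%:Z) * (qint q 2)^-1 ^+ (k + 2)) *:
        (Gfull q G (n - k) * Btil0 q Wn Wp (k%:Z - 2 * l%:Z))
  /\
  Wn n = - (q - q^-1)^-1 *:
    \sum_(k < n.+1) \sum_(l < k.+1)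
      (('C(k, l))%:R * q ^ (k%:Z - 2 * l%:Z) * (qint q 2)^-1 ^+ (k + 2)) *:
        (Gfull q G (n - k) * Btil1 q Wn Wp (k%:Z - 2 * l%:Z)).
Proof.
have [h1 h2] := main_ind hq0 hqroot hrel n.
split; [rewrite {1}h1 | rewrite {1}h2]; congr (_ *: _); apply: eq_bigr => k _;
  rewrite /Isum mulr_sumr scaler_sumr; apply: eq_bigr => l _;
  rewrite -scalerAr scalerA mulrC //.
by rewrite exprz_inv opprB.
Qed.
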